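(* Let $n$ be odd, let $p'$ be a prime divisor of $n$, and let $A=L(n;p')$. Let $p$ be a prime divisor of $n$ which is coprime with $n'=n/p$. Then $S(n')\subseteq f(A)$, where $f:\mathbb{Z}_n\to\mathbb{Z}_{n'}$ is the natural map.
   Context: $U(m)$ is the unit group of $\mathbb{Z}_m$. For odd $m=\prod p_i^{r_i}$, a prime $p\mid m$ and $a\in U(m)$, $\left(\frac{a}{p}\right)$ is the Legendre symbol of the image of $a$ in $\mathbb{Z}_p$ and $\left(\frac{a}{m}\right)=\prod\left(\frac{a}{p_i}\right)^{r_i}$ is the Jacobi symbol; $S(m)$ is the kernel of $a\mapsto\left(\frac{a}{m}\right)$ on $U(m)$, and for a prime $p'\mid m$, $L(m;p')=\{a\in U(m):\left(\frac{a}{m}\right)=\left(\frac{a}{p'}\right)\}$. The natural map $\mathbb{Z}_n\to\mathbb{Z}_{n'}$ is $a+n\mathbb{Z}\mapsto a+n'\mathbb{Z}$. *)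

(* Defs.v *)
From mathcomp Require Import all_boot all_order all_algebra.
Set Implicit Arguments. Unset Strict Implicit. Unset Printing Implicit Defensive.
Import GRing.Theory Num.Theory.
Local Open Scope ring_scope.

(* Elements of Z_m are represented by their canonical representatives
   a : nat with a < m. *)

Definition unitZ (m a : nat) : bool := (a < m)%N && coprime a m.

Definition legendre (p a : nat) : int :=
  if (p %| a)%N then 0
  else if [exists x : 'I_p, (x * x == a %[mod p])%N] then 1 else -1.

Definition jacobi (m a : nat) : int :=
  \prod_(q <- primes m) (legendre q a) ^+ (logn q m).

Definition Sset (m a : nat) : bool := unitZ m a && (jacobi m a == 1).

Definition Lset (m p' a : nat) : bool := unitZ m a && (jacobi m a == legendre p' a).

(* Main.v *)
Require Import Defs.
From mathcomp Require Import all_boot all_order all_algebra zify.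
Set Implicit Arguments. Unset Strict Implicit. Unset Printing Implicit Defensive.
Import GRing.Theory Num.Theory.
Local Open Scope ring_scope.

Lemma legendre_mod (q a : nat) : legendre q a = legendre q (a %% q).
Proof. by rewrite /legendre /dvdn !modn_mod. Qed.

Lemma legendre_eqmod (q a b : nat) : (a = b %[mod q])%N -> legendre q a = legendre q b.
Proof. by move=> h; rewrite legendre_mod h -legendre_mod. Qed.

Lemma jac_big (m a N : nat) : (m < N)%N ->
  jacobi m a = \prod_(0 <= q < N) legendre q a ^+ logn q m.
Proof.
move=> mN.
rewrite (bigID (fun q => q \in primes m)) /=.
rewrite [X in _ * X]big1 ?mulr1; last first.
  by move=> q; rewrite -logn_gt0 -eqn0Ngt => /eqP ->.
rewrite -big_filter /jacobi; apply: perm_big.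
apply: uniq_perm; first exact: primes_uniq.
  by rewrite filter_uniq // iota_uniq.
move=> q; rewrite mem_filter mem_iota /= add0n andbC.
have := mem_primes q m; case: (q \in primes m) => //=.
move/esym/and3P=> [_ m0 qm].
  by rewrite subn0 andbT (leq_ltn_trans (dvdn_leq m0 qm) mN).
by rewrite andbF.

Qed.

Lemma jacobi_prime (p a : nat) : prime p -> jacobi p a = legendre p a.
Proof.
by move=> pp; rewrite /jacobi primes_prime // big_seq1 logn_prime // eqxx expr1.
Qed.

Lemma jacobiM (m p a : nat) : (0 < m)%N -> prime p ->
  jacobi (m * p) a = jacobi m a * legendre p a.
Proof.
move=> m0 pp; have p0 := prime_gt0 pp.
have N1: (m < (m * p).+1)%N by rewrite ltnS leq_pmulr.
have N2: (p < (m * p).+1)%N by rewrite ltnS leq_pmull.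
rewrite (jac_big _ (ltnSn _)) (jac_big _ N1) -(jacobi_prime a pp) (jac_big _ N2).
rewrite -big_split /=; apply: eq_bigr => q _.
by rewrite lognM // exprD.
Qed.

Lemma jacobi_eqmod (m a b : nat) : (a = b %[mod m])%N -> jacobi m a = jacobi m b.
Proof.
move=> h; rewrite /jacobi; apply: eq_big_seq => q; rewrite mem_primes => /and3P[_ _ qm].
by rewrite (@legendre_eqmod q a b) // -(modn_dvdm a qm) -(modn_dvdm b qm) h.
Qed.
Lemma surj_inj (T : finType) (f : T -> T) : (forall y, exists x, f x = y) -> injective f.
Proof.
move=> H.
have Hc : forall y, y \in codom f by move=> y; case: (H y) => x <-; exact: codom_f.
pose g y := iinv (Hc y).
have fg : cancel g f by move=> y; rewrite /g f_iinv.
have ginj : injective g := can_inj fg.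
have gf : cancel f g.
  move=> x; case/codomP: (injF_onto ginj x) => y ->; by rewrite fg.
exact: can_inj gf.
Qed.

Lemma nonres (p : nat) : prime p -> odd p -> exists c, (0 < c < p)%N /\ legendre p c = -1.
Proof.
move=> pp op; have p0 := prime_gt0 pp.
have p2 : (2 < p)%N.
  have := prime_gt1 pp; rewrite leq_eqVlt => /orP[/eqP p2|//].
  by rewrite -p2 in op.
suff: ~~ [forall c : 'I_p, [exists x : 'I_p, (x * x == c %[mod p])%N]].
  move/forallPn => [c Hc]; exists c.
  have c0 : (0 < c)%N.
    rewrite lt0n; apply/negP => /eqP c0; move/negP: Hc; apply; apply/existsP.
    by exists c; rewrite c0.
  split; first by rewrite c0 ltn_ord.
  rewrite /legendre (negbTE Hc).
  have -> : (p %| c)%N = false.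
    by apply/negP => /(dvdn_leq c0); rewrite leqNgt ltn_ord.
  by [].
apply/negP => /forallP H.
pose f (x : 'I_p) : 'I_p := Ordinal (ltn_pmod (x * x) p0).
have finj : injective f.
  apply: surj_inj => y; case/existsP: (H y) => x /eqP hx; exists x.
  by apply: val_inj; rewrite /= hx modn_small.
have o1 : (1 < p)%N by apply: ltnW.
have o2 : (p.-1 < p)%N by rewrite prednK // leqnn.
have := finj (Ordinal o1) (Ordinal o2).
have e : (p.-1 * p.-1 = p * (p - 2) + 1)%N.
  nia.
move=> h.
have : Ordinal o1 = Ordinal o2.
  apply: h; apply: val_inj => /=.
  by rewrite e (mulnC p) modnMDl.
move/(congr1 val) => /=.
lia.
Qed.

Theorem lemma3p3 (n p' p : nat) :
  odd n -> prime p' -> (p' %| n)%N -> prime p -> (p %| n)%N ->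
  coprime p (n %/ p) ->
  forall b : nat, Sset (n %/ p) b ->
  exists a : nat, Lset n p' a /\ (a %% (n %/ p))%N = b.
Proof.
move=> on pp' p'n pp pn cop b.
set n' := (n %/ p)%N in cop *.
have en : n = (n' * p)%N by rewrite /n' divnK.
clearbody n'; subst n.
move=> /andP[/andP[bn cb] /eqP jb].
have n0 : (0 < n' * p)%N by case: (n' * p)%N on.
have n'0 : (0 < n')%N by move: n0; rewrite muln_gt0 => /andP[].
have op : odd p by move: on; rewrite oddM => /andP[].
have p1 : (1 < p)%N := prime_gt1 pp.
have [c [c0 cl]] : exists c, (0 < c < p)%N /\ (p' != p -> legendre p c = legendre p' b).
  case: (eqVneq p' p) => [_|ne].
    by exists 1%N; rewrite p1.
  have p'n' : (p' %| n')%N.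
    by move: p'n; rewrite Euclid_dvdM // (dvdn_prime2 pp' pp) (negbTE ne) orbF.
  have ndb : ~~ (p' %| b)%N.
    rewrite -prime_coprime // coprime_sym; exact: coprime_dvdr p'n' cb.
  have le1 : legendre p 1 = 1.
    rewrite /legendre.
    have -> : (p %| 1)%N = false by rewrite dvdn1; case: (p) p1 => // [[]].
    have -> : [exists x : 'I_p, (x * x == 1 %[mod p])%N] by apply/existsP; exists (Ordinal p1).
    by [].
  have -> : legendre p' b = if [exists x : 'I_p', (x * x == b %[mod p'])%N] then 1 else -1 by rewrite /legendre (negbTE ndb).
  case: ([exists x : 'I_p', (x * x == b %[mod p'])%N]).
    exists 1%N; split; [by rewrite p1 | by rewrite le1].
  have [c [c0 cl]] := nonres pp op.
  by exists c; split.
pose a := (chinese n' p b c %% (n' * p))%N.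
have ha1 : (a = b %[mod n'])%N.
  by rewrite /a (modn_dvdm _ (dvdn_mulr p (dvdnn n'))) chinese_modl // coprime_sym.
have ha2 : (a = c %[mod p])%N.
  by rewrite /a (modn_dvdm _ (dvdn_mull n' (dvdnn p))) chinese_modr // coprime_sym.
exists a; split; last by rewrite ha1 modn_small.
rewrite /Lset /unitZ ltn_pmod //= coprimeMr -coprime_modl ha1 coprime_modl cb /=.
rewrite -coprime_modl ha2 coprime_modl coprime_sym prime_coprime //.
have -> /= : (p %| c)%N = false.
  by apply/negP => /(dvdn_leq (proj1 (andP c0))); rewrite leqNgt (proj2 (andP c0)).
rewrite jacobiM // (jacobi_eqmod ha1) jb mul1r (legendre_eqmod ha2).
case: (eqVneq p' p) => [->|ne]; first by rewrite (legendre_eqmod ha2).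
have p'n' : (p' %| n')%N.
  by move: p'n; rewrite Euclid_dvdM // (dvdn_prime2 pp' pp) (negbTE ne) orbF.
rewrite cl // (@legendre_eqmod p' a b) //.
by rewrite -(modn_dvdm a p'n') -(modn_dvdm b p'n') ha1.
Qed.
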